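(* There is an absolute constant $c>0$ such that for infinitely many $n$ there exist integers $b_1,\dots,b_n\ge 0$ with $b_1+\dots+b_n=n-1$ such that $(b_1,\dots,b_n)$-BG has an equilibrium graph in the MAX version with diameter at least $cn$.
   Context: Bounded budget network creation game $(b_1,\dots,b_n)$-BG: $n$ players with integer budgets $0\le b_i\le n-1$. A strategy of player $i$ is a set $S_i\subseteq\{1,\dots,n\}\setminus\{i\}$ with $|S_i|=b_i$; a profile is realized by the directed graph $G$ on $u_1,\dots,u_n$ with an arc $\overrightarrow{u_iu_j}$ iff $j\in S_i$. $U(G)$ is the undirected multigraph obtained by ignoring directions; $\operatorname{dist}(u,v)$ is the distance in $U(G)$, defined as $n^2$ between different components. MAX cost: $c_{MAX}(u)=\max_v\operatorname{dist}(u,v)+(\kappa-1)n^2$, $\kappa$ the number of components of $U(G)$. An equilibrium graph in the MAX version is a realization in which no vertex can decrease its MAX cost by changing its own strategy while the other strategies are fixed. The diameter is the maximum distance between two vertices. *)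

(* Defs.v *)
From Stdlib Require Import Reals.
From mathcomp Require Import all_boot all_order.
Set Implicit Arguments. Unset Strict Implicit. Unset Printing Implicit Defensive.

(* Bounded budget network creation game on n players u_0,...,u_{n-1}
   (indexed by 'I_n).  A profile assigns to each player i a set S i of
   out-neighbours (its strategy). *)
Section BG.
Variable n : nat.
Definition profile := 'I_n -> {set 'I_n}.

Definition valid_profile (b : 'I_n -> nat) (S : profile) : Prop :=
  forall i, i \notin S i /\ #|S i| = b i.

Definition adj (S : profile) : rel 'I_n :=
  fun u v => (v \in S u) || (u \in S v).

Fixpoint ball (S : profile) (k : nat) (u : 'I_n) : {set 'I_n} :=
  match k with
  | 0 => [set u]
  | k'.+1 => ball S k' u :|: [set v | [exists w in ball S k' u, adj S w v]]
  end.

(* distance in U(G); n^2 between vertices of different components *)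
Definition dist (S : profile) (u v : 'I_n) : nat :=
  let k := find (fun k => v \in ball S k u) (iota 0 n) in
  if k < n then k else n ^ 2.

Definition ncomp (S : profile) : nat := n_comp (adj S) [set: 'I_n].

Definition cost_max (S : profile) (u : 'I_n) : nat :=
  \max_(v : 'I_n) dist S u v + (ncomp S - 1) * n ^ 2.

Definition deviate (S : profile) (i : 'I_n) (T : {set 'I_n}) : profile :=
  fun j => if j == i then T else S j.

Definition max_equilibrium (b : 'I_n -> nat) (S : profile) : Prop :=
  valid_profile b S /\
  forall (i : 'I_n) (T : {set 'I_n}), i \notin T -> #|T| = b i ->
    cost_max S i <= cost_max (deviate S i T) i.

Definition diameter (S : profile) : nat :=
  \max_(u : 'I_n) \max_(v : 'I_n) dist S u v.
End BG.

(* Main.v *)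
Require Import Defs.
From mathcomp Require Import all_boot all_order zify.
From Stdlib Require Import Reals Lra.
From Stdlib Require Import FunctionalExtensionality.
Set Implicit Arguments. Unset Strict Implicit. Unset Printing Implicit Defensive.

Section Gen.
Variable n : nat.
Implicit Types (G : profile n) (u v x y : 'I_n).

Lemma adj_sym G : symmetric (adj G).
Proof. by move=> x y; rewrite /adj orbC. Qed.

Lemma ball_step G k u x y : x \in ball G k u -> adj G x y -> y \in ball G k.+1 u.
Proof.
move=> hx hxy /=; rewrite in_setU; apply/orP; right.
by rewrite inE; apply/existsP; exists x; rewrite hx hxy.
Qed.

Lemma ball_mono G k k' u : k <= k' -> ball G k u \subset ball G k' u.
Proof.
elim: k' => [|k' IH]; first by rewrite leqn0 => /eqP ->.
rewrite leq_eqVlt => /orP[/eqP -> //|/IH h].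
apply: (subset_trans h); exact: subsetUl.
Qed.

Lemma pot G u (f : 'I_n -> nat) :
  (forall x y, adj G x y -> f y <= f x + 1) ->
  forall k x, x \in ball G k u -> f x <= f u + k.
Proof.
move=> hf; elim=> [|k IH] x /=.
  by rewrite inE => /eqP ->; rewrite addn0.
rewrite in_setU => /orP[/IH h|]; first lia.
rewrite inE => /existsP[w /andP[hw hwx]].
have := IH _ hw; have := hf _ _ hwx; lia.
Qed.

Lemma dist_ge G u v e (f : 'I_n -> nat) :
  (forall x y, adj G x y -> f y <= f x + 1) -> f u = 0 -> e <= f v ->
  e <= expn n 2 -> e <= Defs.dist G u v.
Proof.
move=> hf hu hv hn; rewrite /Defs.dist.
case: ifP => hk; last first.
  move: hn; rewrite /= => hn; lia.


set k := find _ _ in hk *.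
have hs : k < size (iota 0 n) by rewrite size_iota.
have := nth_find 0 (a:= fun k => v \in ball G k u) (s := iota 0 n).
rewrite has_find => /(_ hs); rewrite nth_iota // add0n => hb.
have := pot hf hb; rewrite -/k; lia.
Qed.

Lemma dist_le G u v k : v \in ball G k u -> k < n -> Defs.dist G u v <= k.
Proof.
move=> hb hk; rewrite /Defs.dist.
have hf : find (fun k => v \in ball G k u) (iota 0 n) <= k.
  rewrite leqNgt; apply/negP => /(before_find 0).
  by rewrite nth_iota // add0n hb.
by rewrite ifT //; apply: leq_ltn_trans hf hk.
Qed.

Lemma ball_connect G k u x : x \in ball G k u -> connect (adj G) u x.
Proof.
elim: k x => [|k IH] x /=; first by rewrite inE => /eqP ->; exact: connect0.
rewrite in_setU => /orP[/IH //|].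
rewrite inE => /existsP[w /andP[hw hwx]].
apply: connect_trans (IH _ hw) (connect1 hwx).
Qed.

Lemma ncomp1 G u : (forall x, exists k, x \in ball G k u) -> ncomp G = 1.
Proof.
move=> hall; rewrite /ncomp.
rewrite -(n_comp_connect (sym_connect_sym (adj_sym G)) u).
apply: eq_n_comp_r => x; have [k hk] := hall x.
rewrite inE; symmetry; exact: (ball_connect hk).
Qed.

Lemma cost_le G u e : (forall x, exists k, x \in ball G k u) ->
  (forall v, Defs.dist G u v <= e) -> cost_max G u <= e.
Proof.
move=> hall hd; rewrite /cost_max (ncomp1 hall) subnn mul0n addn0.
by apply/bigmax_leqP => v _; apply: hd.
Qed.

Lemma cost_ge G u v : Defs.dist G u v <= cost_max G u.
Proof.
rewrite /cost_max. 
have h := @leq_bigmax _ (fun v => Defs.dist G u v) v.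
apply: (leq_trans h); exact: leq_addr.
Qed.

Lemma diam_ge G u v : Defs.dist G u v <= diameter G.
Proof.
rewrite /diameter; apply: leq_trans (@leq_bigmax _ (fun u => \max_v Defs.dist G u v) u).
exact: (@leq_bigmax _ (fun v => Defs.dist G u v)).
Qed.

Lemma lip_adj G (f : 'I_n -> nat) :
  (forall x y, y \in G x -> f y <= f x + 1 /\ f x <= f y + 1) ->
  forall x y, adj G x y -> f y <= f x + 1.
Proof.
move=> h x y /orP[/h|/h]; lia.
Qed.

Lemma ball_witness G u (g : 'I_n -> nat) :
  (forall x, g x = 0 -> x = u) ->
  (forall x, 0 < g x -> exists y, adj G y x /\ g y = (g x).-1) ->
  forall k x, g x <= k -> x \in ball G k u.
Proof.
move=> hu hs; elim=> [|k IH] x hx /=.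
  by rewrite inE (hu x) //; lia.
case: (posnP (g x)) => [h0|hp].
  rewrite in_setU; apply/orP; left; apply: IH; lia.
have [y [hyx hy]] := hs x hp.
rewrite in_setU; apply/orP; right; rewrite inE; apply/existsP; exists y.
rewrite hyx andbT; apply: IH; lia.
Qed.
End Gen.
Section Conc.
Variable L : nat.
Hypothesis hL : 2 <= L.
Local Notation N := (3 * L).+1.

Definition ift (c : bool) (a : nat) : seq nat := if c then [:: a] else [::].
Lemma mem_ift c a w : (w \in ift c a) = c && (w == a).
Proof. by case: c; rewrite /= ?inE. Qed.
Lemma size_ift c a : size (ift c a) = c.
Proof. by case: c. Qed.

Definition targets (u : nat) : seq nat :=
  ift ((1 <= u) && (u < L + 1)) (u - 1) ++ ift ((L <= u) && (u < 2 * L)) (u + 1) ++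
  ift ((2 * L + 1 <= u) && (u < 2 * L + 2)) L ++ ift ((2 * L + 1 <= u) && (u < 3 * L)) (u + 1).

Definition arcb (u w : nat) : bool :=
  [|| (1 <= u) && (u < L + 1) && (w == u - 1), (L <= u) && (u < 2 * L) && (w == u + 1),
      (2 * L + 1 <= u) && (u < 2 * L + 2) && (w == L) |
      (2 * L + 1 <= u) && (u < 3 * L) && (w == u + 1)].

Lemma mem_targets u w : (w \in targets u) = arcb u w.
Proof. by rewrite /targets !mem_cat !mem_ift /arcb. Qed.

Lemma size_targets u : size (targets u) =
  ((1 <= u) && (u < L + 1) : nat) + ((L <= u) && (u < 2 * L) : nat) +
  ((2 * L + 1 <= u) && (u < 2 * L + 2) : nat) + ((2 * L + 1 <= u) && (u < 3 * L) : nat).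
Proof. by rewrite /targets !size_cat !size_ift !addnA. Qed.

Lemma uniq_targets u : uniq (targets u).
Proof.
rewrite /targets /ift.
repeat case: ifP => ?; rewrite /= ?inE ?andbT; (done || lia).
Qed.

Lemma targets_lt u : u < N -> all (fun k => k < N) (targets u).
Proof.
move=> hu; rewrite /targets /ift.
repeat case: ifP => ?; rewrite /= ?andbT; (done || lia).
Qed.

Lemma notin_targets u : u \notin targets u.
Proof. rewrite mem_targets /arcb; lia. Qed.

Lemma card_valin m (s : seq nat) : uniq s -> all (fun k => k < m) s ->
  #|[set x : 'I_m | val x \in s]| = size s.
Proof.
elim: s => [|k s IH] /=.
  move=> _ _; apply/eqP; rewrite cards_eq0; apply/eqP/setP => x; by rewrite !inE.
move=> /andP[hk hu] /andP[hkm ha].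
have -> : [set x : 'I_m | val x \in k :: s] = Ordinal hkm |: [set x | val x \in s].
  apply/setP => x; rewrite !inE -val_eqE //.
by rewrite cardsU1 IH // inE /= hk.
Qed.

Definition Gr : profile N := fun u => [set w | val w \in targets (val u)].
Definition bud (u : 'I_N) : nat := size (targets u).

Lemma mem_Gr u w : (w \in Gr u) = arcb u w.
Proof. by rewrite inE mem_targets. Qed.

Lemma card_Gr u : #|Gr u| = bud u.
Proof.
rewrite /Gr /= card_valin ?uniq_targets //; apply: targets_lt; exact: ltn_ord.
Qed.

Lemma sum_ind m lo hi : lo <= hi ->
  \sum_(0 <= i < m) ((lo <= i) && (i < hi) : nat) = minn hi m - minn lo m.
Proof.
move=> hlh; elim: m => [|m IH]; first by rewrite big_geq //; lia.
rewrite big_nat_recr //= IH; lia.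
Qed.

Lemma sum_bud : \sum_(i < N) bud i = 3 * L.
Proof.
rewrite /bud.
rewrite -(big_mkord xpredT (fun i => size (targets i))).
under eq_bigr do rewrite size_targets.
rewrite !big_split /= !sum_ind; lia.
Qed.

Lemma bud_le u : bud u <= N - 1.
Proof. rewrite /bud size_targets; lia. Qed.


Definition absd (a b : nat) := (a - b) + (b - a).
Definition td (x y : nat) : nat :=
  if (x <= 2 * L) && (y <= 2 * L) then absd x y
  else if (2 * L < x) && (2 * L < y) then absd x y
  else if x <= 2 * L then absd x L + (y - 2 * L) else absd y L + (x - 2 * L).
Definition E (x : nat) : nat := if x <= 2 * L then maxn x (2 * L - x) else x - L.
Definition pstep (i x : nat) : nat :=
  if x <= 2 * L then
    (if i <= 2 * L then (if x < i then x + 1 else x - 1)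
     else (if x == L then 2 * L + 1 else if x < L then x + 1 else x - 1))
  else (if 2 * L < i then (if x < i then x + 1 else x - 1)
        else (if x == 2 * L + 1 then L else x - 1)).

Lemma pstep_ok i x : i < N -> x < N -> 0 < td i x ->
  [/\ pstep i x < N, arcb (pstep i x) x || arcb x (pstep i x) &
      td i (pstep i x) = (td i x).-1].
Proof.
move=> hi hx; rewrite /pstep.
repeat case: ifP => ?; rewrite /td /arcb /absd; repeat case: ifP => ?; move=> ?; split; lia.
Qed.
End Conc.
Section D.
Variable L : nat.
Hypothesis hL : 2 <= L.
Local Notation N := (3 * L).+1.

Lemma td0 i x : td L i x = 0 -> i = x.
Proof. rewrite /td /absd; repeat case: ifP => ?; lia. Qed.

Lemma td_le_E i v : i < N -> v < N -> td L i v <= E L i.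
Proof. move=> hi hv; rewrite /td /absd /E; repeat case: ifP => ?; lia. Qed.

Lemma E_lt i : i < N -> E L i < N.
Proof. move=> hi; rewrite /E; repeat case: ifP => ?; lia. Qed.

Lemma all_ball (i x : 'I_N) : x \in ball (@Gr L) (td L i x) i.
Proof.
apply: (ball_witness (g := fun x : 'I_N => td L i x)) => //.
- by move=> y /td0 h; apply/val_inj.
- move=> y hy; have [h1 h2 h3] := pstep_ok hL (ltn_ord i) (ltn_ord y) hy.
  exists (inord (pstep L i y)); rewrite /adj !mem_Gr inordK //.
Qed.

Lemma cost_up (i : 'I_N) : cost_max (@Gr L) i <= E L i.
Proof.
apply: cost_le.
- by move=> x; exists (td L i x); exact: all_ball.
- move=> v; have h1 := td_le_E (ltn_ord i) (ltn_ord v).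
  have h2 := E_lt (ltn_ord i).
  apply: leq_trans (dist_le (all_ball i v) _) _ => //; lia.
Qed.

Lemma lower (i : 'I_N) (T : {set 'I_N}) (f : nat -> nat) vv :
  vv < N -> f i = 0 -> E L i <= f vv ->
  (forall u w, u < N -> w < N -> u != nat_of_ord i -> arcb L u w ->
     f w <= f u + 1 /\ f u <= f w + 1) ->
  (forall w : 'I_N, w \in T -> f w <= 1) ->
  E L i <= cost_max (deviate (@Gr L) i T) i.
Proof.
move=> hv hi hE hA hT.
apply: leq_trans (cost_ge _ _ (inord vv)).
have hEn := E_lt (ltn_ord i).
apply: (dist_ge (f := fun x : 'I_N => f x)) => //.
- apply: lip_adj => x y; rewrite /deviate; case: eqP => [->|hne].
    move/hT; rewrite hi; lia.
  rewrite mem_Gr => h; apply: hA => //.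
  by apply/eqP => /val_inj.
- by rewrite inordK.
- have : N <= expn N 2 by rewrite -mulnn leq_pmulr.
  move=> h; apply: leq_trans h; exact: ltnW.
Qed.

End D.
Section Cls.
Variable L : nat.
Hypothesis hL : 2 <= L.
Local Notation N := (3 * L).+1.
Local Notation G := (@Gr L).

Ltac sA := move=> ? ? ? ? ?; rewrite /arcb /=; move=> ?;
  repeat case: ifP => ?; split; lia.
Ltac sE := rewrite /E /=; repeat case: ifP => ?; lia.
Ltac s1 := move=> ?; rewrite inE => /eqP -> /=; repeat case: ifP => ?; lia.
Ltac s2 := move=> ?; rewrite !inE => /orP[] /eqP -> /=; repeat case: ifP => ?; lia.

Lemma cls_left (i w : 'I_N) : 1 <= i < L ->
  E L i <= cost_max (deviate G i [set w]) i.
Proof.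
move=> hi; case: (ltnP w i) => hw.
- apply: (lower hL (f := fun u => if u <= 2 * L then u - i else (L - i) + (u - 2 * L))
     (vv := 2 * L)); [lia | sE | sE | sA | s1].
- apply: (lower hL (f := fun u => if u < i then 2 * L - i else 0) (vv := 0));
    [lia | sE | sE | sA | s1].
Qed.

Lemma cls_right (i w : 'I_N) : L < i < 2 * L ->
  E L i <= cost_max (deviate G i [set w]) i.
Proof.
move=> hi; have [hw|hw] := boolP ((i < w) && (w <= 2 * L)).
- apply: (lower hL (f := fun u => if u <= 2 * L then i - u else (i - L) + (u - 2 * L))
     (vv := 0)); [lia | sE | sE | sA | s1].
- apply: (lower hL (f := fun u => if (i < u) && (u <= 2 * L) then nat_of_ord i else 0)
     (vv := 2 * L)); [lia | sE | sE | sA | s1].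
Qed.

Lemma cls_leg (i w : 'I_N) : 2 * L + 2 <= i < 3 * L ->
  E L i <= cost_max (deviate G i [set w]) i.
Proof.
move=> hi; case: (ltnP i w) => hw.
- apply: (lower hL (f := fun u => if u <= 2 * L then (i - 2 * L) + absd u L else i - u)
     (vv := 0)); rewrite /absd; [lia | sE | sE | sA | s1].
- apply: (lower hL (f := fun u => if i < u then i - L else 0) (vv := 3 * L));
    [lia | sE | sE | sA | s1].
Qed.

Lemma cls_z (i w1 w2 : 'I_N) : nat_of_ord i = L ->
  E L i <= cost_max (deviate G i [set w1; w2]) i.
Proof.
move=> hi; have [hA|hA] := boolP ((L <= w1) && (L <= w2)).
  apply: (lower hL (f := fun u => if u < L then L else 0) (vv := 0));
    [lia | sE | sE | sA | s2].
have [hB|hB] := boolP (~~ ((L < w1) && (w1 <= 2 * L)) && ~~ ((L < w2) && (w2 <= 2 * L))).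
  apply: (lower hL (f := fun u => if (L < u) && (u <= 2 * L) then L else 0) (vv := 2 * L));
    [lia | sE | sE | sA | s2].
apply: (lower hL (f := fun u => if u <= 2 * L then 0 else u - 2 * L) (vv := 3 * L));
  [lia | sE | sE | sA | s2].
Qed.

Lemma cls_y_mixed (i p q : 'I_N) : nat_of_ord i = 2 * L + 1 -> p <= 2 * L -> 2 * L + 2 <= q ->
  E L i <= cost_max (deviate G i [set p; q]) i.
Proof.
move=> hi hp hq; case: (leqP p L) => hpL.
- apply: (lower hL (f := fun u => if u <= 2 * L then 1 + absd u p else 0) (vv := 2 * L));
    rewrite /absd; [lia | sE | sE | sA | s2].
- apply: (lower hL (f := fun u => if u <= 2 * L then 1 + absd u p else 0) (vv := 0));
    rewrite /absd; [lia | sE | sE | sA | s2].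
Qed.

Lemma cls_y (i w1 w2 : 'I_N) : nat_of_ord i = 2 * L + 1 -> w1 != i -> w2 != i ->
  E L i <= cost_max (deviate G i [set w1; w2]) i.
Proof.
move=> hi h1 h2; have [hA|hA] := boolP ((2 * L < w1) && (2 * L < w2)).
  apply: (lower hL (f := fun u => if u <= 2 * L then L + 1 else 0) (vv := 0));
    [lia | sE | sE | sA | s2].
have [hB|hB] := boolP ((w1 < 2 * L + 2) && (w2 < 2 * L + 2)).
  apply: (lower hL (f := fun u => if 2 * L + 2 <= u then L + 1 else 0) (vv := 3 * L));
    [lia | sE | sE | sA | s2].
have h1' : nat_of_ord w1 != nat_of_ord i by [].
have h2' : nat_of_ord w2 != nat_of_ord i by [].
case: (leqP w1 (2 * L)) => hw1.
  apply: cls_y_mixed => //; lia.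
rewrite setUC; apply: cls_y_mixed => //; lia.
Qed.

End Cls.
Lemma equil L (hL : 2 <= L) : max_equilibrium (@bud L) (@Gr L).
Proof.
split.
  move=> i; split; last exact: card_Gr.
  by rewrite mem_Gr /arcb; lia.
move=> i T hiT hc.
have hbud : bud i = ((1 <= i) && (i < L + 1) : nat) + ((L <= i) && (i < 2 * L) : nat) +
  ((2 * L + 1 <= i) && (i < 2 * L + 2) : nat) + ((2 * L + 1 <= i) && (i < 3 * L) : nat).
  by rewrite /bud size_targets.
have hi := ltn_ord i.
case: (posnP (bud i)) => hb.
  have hT : T = set0 by apply: cards0_eq; rewrite hc.
  have hG : Gr i = set0 by apply: cards0_eq; rewrite card_Gr.
  have -> : deviate (@Gr L) i T = @Gr L.
    apply: functional_extensionality => j; rewrite /deviate.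
    by case: eqP => [->|//]; rewrite hT hG.
  by [].
apply: leq_trans (cost_up hL i) _.
case: (ltnP i L) => h1.
  have /cards1P[w ->] : #|T| == 1 by apply/eqP; lia.
  apply: cls_left => //; lia.
case: (eqVneq (nat_of_ord i) L) => h2.
  have /cards2P[w1 [w2 [_ ->]]] : #|T| == 2 by apply/eqP; lia.
  exact: cls_z.
case: (ltnP i (2 * L)) => h3.
  have /cards1P[w ->] : #|T| == 1 by apply/eqP; lia.
  apply: cls_right => //; lia.
case: (eqVneq (nat_of_ord i) (2 * L + 1)) => h4.
  have /cards2P[w1 [w2 [_ hT]]] : #|T| == 2 by apply/eqP; lia.
  move: hiT; rewrite hT !inE negb_or => /andP[hw1 hw2].
  by apply: cls_y; rewrite // eq_sym.
have /cards1P[w ->] : #|T| == 1 by apply/eqP; lia.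
apply: cls_leg => //; lia.
Qed.

Lemma diam_lb L (hL : 2 <= L) : 2 * L <= diameter (@Gr L).
Proof.
have h0 : 0 < (3 * L).+1 by [].
have h2 : 2 * L < (3 * L).+1 by lia.
apply: leq_trans (diam_ge _ (Ordinal h0) (Ordinal h2)).
apply: (dist_ge (f := fun x : 'I_(3 * L).+1 =>
   if nat_of_ord x <= 2 * L then nat_of_ord x else L + (x - 2 * L))).
- apply: lip_adj => x y; rewrite mem_Gr /arcb => h.
  have := ltn_ord x; have := ltn_ord y.
  by repeat case: ifP => ?; move=> *; split; lia.
- by [].
- by rewrite /= leqnn.
- have : 2 * L <= 2 * L * (2 * L) by rewrite leq_pmulr //; lia.
  move=> h; apply: leq_trans h _; rewrite -mulnn; apply: leq_mul; lia.
Qed.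
Theorem mainTheorem3 :
  exists c : R, (0 < c)%R /\
    forall N : nat, exists n : nat, (N <= n)%N /\
      exists b : 'I_n -> nat,
        (forall i, b i <= n - 1)%N /\
        (\sum_(i < n) b i)%N = (n - 1)%N /\
        exists S : profile n,
          max_equilibrium b S /\ (c * INR n <= INR (diameter S))%R.
Proof.
exists (1/2)%R; split; first lra.
move=> N0; set L := N0 + 2.
have hL : 2 <= L by rewrite /L; lia.
exists (3 * L).+1; split; first by rewrite /L; lia.
exists (@bud L); split; first exact: bud_le.
split; first by rewrite sum_bud; lia.
exists (@Gr L); split; first exact: equil.
have hd := diam_lb hL.
have hR : (INR (2 * L) <= INR (diameter (@Gr L)))%R by apply: le_INR; apply/leP.
have e1 : INR (2 * L) = (2 * INR L)%R by rewrite -multE mult_INR; simpl; ring.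
have e2 : INR (3 * L).+1 = (3 * INR L + 1)%R by rewrite S_INR -multE mult_INR; simpl; ring.
have hL2 : (2 <= INR L)%R.
  have : (INR 2 <= INR L)%R by apply: le_INR; apply/leP.
  by [].
rewrite e2; rewrite e1 in hR; simpl in hR; lra.
Qed.
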